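(* On the $L\times L$ qubit grid, define $$C_{2D}=U^\dagger C_Z U,\qquad U=C_\leftarrow C_\uparrow,\qquad C_Z=\prod_{c=0}^{L-1}\prod_{r=0}^{L-2}\mathrm{CZ}_{(r,c),(r+1,c)},$$ and $W=\Bigl(\prod_{r\text{ odd}}\prod_{c}Z_{(r,c)}\Bigr)C_{2D}$. Then $W$ maps the JW encoding with ordering $m_Z$ to the JW encoding with ordering $m_S$, and also maps the JW encoding with ordering $m_S$ to that with ordering $m_Z$. In particular, $W$ consists of $\mathcal O(N)$ nearest-neighbour CNOT/CZ gates and single-qubit $Z$ gates and has depth $\mathcal O(L)=\mathcal O(\sqrt N)$ on the nearest-neighbour square lattice, $N=L^2$.
   Context: Qubits sit on the grid $\{0,\dots,L-1\}^2$ (sites $(r,c)$, row $r$, column $c$), with nearest-neighbour connectivity (two-qubit gates only between sites at $\ell_1$-distance 1). Fermionic mode $j$ is identified with qubit $j$. A canonical ordering is a bijection $m$ from sites to $\{0,\dots,N-1\}$; the JW encoding with ordering $m$ has Majoranas $\chi^{(m)}_{2j}=X_j\prod_{k:m(k)<m(j)}Z_k$, $\chi^{(m)}_{2j+1}=Y_j\prod_{k:m(k)<m(j)}Z_k$, and a unitary $W$ maps the encoding with ordering $m$ to that with $m'$ if $W\chi^{(m)}_aW^\dagger=\chi^{(m')}_a$ for all $a$. The orderings are $m_Z(r,c)=Lc+(L-1-r)$ and $m_S(r,c)=Lr+c$ for $r$ even, $m_S(r,c)=Lr+(L-1-c)$ for $r$ odd. $x_{(r,c)}$ is the computational-basis bit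 of qubit $(r,c)$. $C_\uparrow$ is the CNOT circuit (CNOT ladders along columns, gates $\mathrm{CNOT}_{(r+1,c)\to(r,c)}$ in order of decreasing $r$) acting by $x_{(r,c)}\mapsto\bigoplus_{r'\ge r}x_{(r',c)}$; $C_\leftarrow$ is the CNOT circuit (ladders along even rows, gates $\mathrm{CNOT}_{(r,c+1)\to(r,c)}$ in order of decreasing $c$) acting by $x_{(r,c)}\mapsto\bigoplus_{c'\ge c}x_{(r,c')}$ for even $r$ and trivially on odd rows. *)

(* Defs.v *)
From mathcomp Require Import all_boot all_order all_algebra.
From mathcomp Require Import algC.
Set Implicit Arguments. Unset Strict Implicit. Unset Printing Implicit Defensive.
Import Order.TTheory GRing.Theory Num.Theory.
Local Open Scope ring_scope.

(* sites (r, c) : row r, column c *)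
Definition site (L : nat) := ('I_L * 'I_L)%type.
Definition basis (L : nat) := {ffun site L -> bool}.
(* operators = matrices  A x y = <x| A |y> *)
Definition op (L : nat) := basis L -> basis L -> algC.

Definition mulop L (A B : op L) : op L :=
  fun x y => \sum_(z : basis L) A x z * B z y.
Definition idop L : op L := fun x y => (x == y)%:R.
Arguments idop L : clear implicits.
Definition adj L (A : op L) : op L := fun x y => (A y x)^*.

Definition setbit L (y : basis L) (j : site L) (b : bool) : basis L :=
  [ffun k => if k == j then b else y k].

Definition Xop L (j : site L) : op L :=
  fun x y => (x == setbit y j (~~ y j))%:R.
Definition Yop L (j : site L) : op L :=
  fun x y => (x == setbit y j (~~ y j))%:R * (if y j then - 'i else 'i).
Definition Zop L (j : site L) : op L :=
  fun x y => (x == y)%:R * (-1) ^+ (y j).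

Definition CNOTop L (c t : site L) : op L :=
  fun x y => (x == setbit y t (y t (+) y c))%:R.
Definition CZop L (a b : site L) : op L :=
  fun x y => (x == y)%:R * (-1) ^+ (y a && y b).

Definition permop L (f : basis L -> basis L) : op L :=
  fun x y => (x == f y)%:R.

Definition mZ L (s : site L) : nat := (L * s.2 + (L.-1 - s.1))%N.
Definition mS L (s : site L) : nat :=
  (if ~~ odd s.1 then L * s.1 + s.2 else L * s.1 + (L.-1 - s.2))%N.

(* JW Majoranas: chi_(2j) (b = false) and chi_(2j+1) (b = true) *)
Definition JW L (m : site L -> nat) (j : site L) (b : bool) : op L :=
  mulop (if b then Yop j else Xop j)
        (\big[@mulop L/idop L]_(k : site L | (m k < m j)%N) Zop k).

Definition maps_encoding L (W : op L) (m m' : site L -> nat) : Prop :=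
  forall (j : site L) (b : bool),
    mulop (mulop W (JW m j b)) (adj W) = JW m' j b.

Definition Cup_map L (x : basis L) : basis L :=
  [ffun s : site L => \big[addb/false]_(t : site L | (t.2 == s.2) && (s.1 <= t.1)%N) x t].
Definition Cleft_map L (x : basis L) : basis L :=
  [ffun s : site L => if odd s.1 then x s else
     \big[addb/false]_(t : site L | (t.1 == s.1) && (s.2 <= t.2)%N) x t].

Definition Cup L : op L := permop (fun x : basis L => Cup_map x).
Arguments Cup L : clear implicits.
Definition Cleft L : op L := permop (fun x : basis L => Cleft_map x).
Arguments Cleft L : clear implicits.
Definition Uop L : op L := mulop (Cleft L) (Cup L).
Arguments Uop L : clear implicits.
Definition CZlayer L : op L :=
  \big[@mulop L/idop L]_(a : site L)
    \big[@mulop L/idop L]_(b : site L | (b.2 == a.2) && (val b.1 == (val a.1).+1))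
      CZop a b.
Arguments CZlayer L : clear implicits.
Definition C2D L : op L := mulop (mulop (adj (Uop L)) (CZlayer L)) (Uop L).
Arguments C2D L : clear implicits.
Definition Zodd L : op L := \big[@mulop L/idop L]_(a : site L | odd a.1) Zop a.
Arguments Zodd L : clear implicits.
Definition Wop L : op L := mulop (Zodd L) (C2D L).
Arguments Wop L : clear implicits.

Inductive gate (L : nat) :=
| GCNOT of site L & site L   (* control, target *)
| GCZ of site L & site L
| GZ of site L.

Definition adjacent L (a b : site L) : bool :=
  (`|(val a.1)%:Z - (val b.1)%:Z|%N + `|(val a.2)%:Z - (val b.2)%:Z|%N == 1)%N.

Definition gate_op L (g : gate L) : op L :=
  match g with GCNOT c t => CNOTop c t | GCZ a b => CZop a b | GZ a => Zop a end.
Definition gate_support L (g : gate L) : seq (site L) :=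
  match g with GCNOT c t => [:: c; t] | GCZ a b => [:: a; b] | GZ a => [:: a] end.
Definition gate_ok L (g : gate L) : bool :=
  match g with GCNOT c t => adjacent c t | GCZ a b => adjacent a b | GZ _ => true end.

Definition layer_ok L (l : seq (gate L)) : bool :=
  all (@gate_ok L) l && uniq (flatten (map (@gate_support L) l)).
Definition layer_op L (l : seq (gate L)) : op L :=
  \big[@mulop L/idop L]_(g <- l) gate_op g.
(* a circuit is a sequence of layers, applied in order (first layer first) *)
Definition circuit_op L (ls : seq (seq (gate L))) : op L :=
  foldl (fun acc l => mulop (layer_op l) acc) (idop L) ls.
Definition circuit_size L (ls : seq (seq (gate L))) : nat := sumn (map size ls).

(* Main.v *)
Require Import Defs.
From mathcomp Require Import all_boot all_order all_algebra.
From mathcomp Require Import algC.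
From mathcomp Require Import zify ring.
From Stdlib Require Import FunctionalExtensionality.
Set Implicit Arguments. Unset Strict Implicit. Unset Printing Implicit Defensive.

Module PB.

Ltac dec := repeat (rewrite ?oddS /=; match goal with
| |- context [minn ?x ?y] =>
   (have -> : minn x y = x by lia) || (have -> : minn x y = y by lia)
| |- context [(?x <= ?y)%N] =>
   (have -> : (x <= y)%N = true by lia) ||
   (have -> : (x <= y)%N = false by lia)
| |- context [(?x == ?y :> nat)] =>
   (have -> : (x == y) = true by lia) ||
   (have -> : (x == y) = false by lia)
end).

Lemma xor_andl (I : Type) (r : seq I) (P : pred I) (k : bool) (F : I -> bool) :
  \big[addb/false]_(i <- r | P i) (k && F i) = k && \big[addb/false]_(i <- r | P i) F i.
Proof. by case: k => //=; rewrite big1. Qed.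

Lemma xor_recr n (F : nat -> bool) :
  \big[addb/false]_(0 <= r < n.+1) F r = \big[addb/false]_(0 <= r < n) F r (+) F n.
Proof. by rewrite big_nat_recr. Qed.

Lemma xor_lt n m : \big[addb/false]_(0 <= r < n) (r < m)%N = odd (minn n m).
Proof.
elim: n => [|n IH]; first by rewrite big_nil min0n.
rewrite xor_recr IH.
case: (ltnP n m) => h.
  have -> : minn n.+1 m = n.+1 by lia.
  by rewrite addbT.
have -> : minn n.+1 m = m by lia.
by rewrite addbF.
Qed.

Lemma xor_pick_nat n q (P : nat -> bool) : (q < n)%N ->
  \big[addb/false]_(0 <= c < n) ((q == c) && P c) = P q.
Proof.
elim: n => [//|n IH] h; rewrite xor_recr.
case: (ltnP q n) => h2.
  have -> : (q == n) = false by lia.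
  by rewrite IH // addbF.
have e : q = n by lia.
rewrite e eqxx /= big1_seq ?addFb // => c; rewrite mem_index_iota => hc.
have -> : (n == c) = false by lia.
by [].
Qed.

Definition R (r c p q : nat) : bool :=
  (r <= p)%N && (if odd r then q == c else (c <= q)%N).

Lemma colR n r p q p' q' : (q < n)%N -> (q' < n)%N ->
  \big[addb/false]_(0 <= c < n) (R r c p q && R r.+1 c p' q') =
  [&& (r <= p)%N, (r.+1 <= p')%N & (if odd r then (q <= q')%N else (q' <= q)%N)].
Proof.
move=> hq hq'; rewrite /R oddS; case: (odd r) => /=.
  rewrite (eq_bigr (fun c => ((r <= p) && (r < p'))%N && ((q == c) && (c <= q')%N))); last first.
    by move=> c _; rewrite andbACA.
  by rewrite xor_andl xor_pick_nat // andbA.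
rewrite (eq_bigr (fun c => ((r <= p) && (r < p'))%N && ((q' == c) && (c <= q)%N))); last first.
  by move=> c _; rewrite andbACA [(c <= q)%N && _]andbC.
by rewrite xor_andl xor_pick_nat // andbA.
Qed.

Lemma rowsum n a b (al be : bool) : (a < n)%N -> (b < n)%N ->
  \big[addb/false]_(0 <= r < n) ((r.+1 < n)%N &&
     ([&& (r <= a)%N, (r.+1 <= b)%N & (if odd r then al else be)] (+)
      [&& (r <= b)%N, (r.+1 <= a)%N & (if odd r then be else al)]))
  = (odd (minn a b) && (al (+) be)) (+) ((a < b)%N && (if odd a then al else be))
      (+) ((b < a)%N && (if odd b then be else al)).
Proof.
move=> ha hb.
rewrite (eq_bigr (fun r => [&& (r <= a)%N, (r.+1 <= b)%N & (if odd r then al else be)] (+)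
      [&& (r <= b)%N, (r.+1 <= a)%N & (if odd r then be else al)])); last first.
  move=> r _; case: (ltnP r.+1 n) => h //=.
  by dec; rewrite /= ?andbF.
have key : forall N, \big[addb/false]_(0 <= r < N)
     ([&& (r <= a)%N, (r.+1 <= b)%N & (if odd r then al else be)] (+)
      [&& (r <= b)%N, (r.+1 <= a)%N & (if odd r then be else al)]) =
   (odd (minn N (minn a b)) && (al (+) be)) (+) [&& (a < b)%N, (a < N)%N & (if odd a then al else be)]
      (+) [&& (b < a)%N, (b < N)%N & (if odd b then be else al)].
  elim=> [|N IH].
    by rewrite big_nil min0n; dec; rewrite /= ?andbF.
  rewrite xor_recr IH; clear IH.
  case: (ltngtP N a) => hNa; case: (ltngtP N b) => hNb; case: (ltngtP a b) => hab; try (exfalso; lia); try subst; dec;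
  rewrite /= ?andbF ?andbT ?addbF; try (by case: (odd _); case: al; case: be).
rewrite key.
have -> : minn n (minn a b) = minn a b by lia.
have -> : (a < n)%N = true by lia.
by have -> : (b < n)%N = true by lia.
Qed.

Lemma lexn n a b c d : (b < n)%N -> (d < n)%N ->
  (n * a + b < n * c + d)%N = (a < c)%N || (a == c) && (b < d)%N.
Proof.
move=> hb hd; case: (ltngtP a c) => h /=.
- have : (n * a.+1 <= n * c)%N by rewrite leq_mul2l h orbT.
  rewrite mulnS => h2; lia.
- have : (n * c.+1 <= n * a)%N by rewrite leq_mul2l h orbT.
  rewrite mulnS => h2; lia.
- by subst; rewrite ltn_add2l.
Qed.

Definition mSn n r c := if ~~ odd r then (n * r + c)%N else (n * r + (n.-1 - c))%N.

Lemma C2nat n a ck b c0 : (a < n)%N -> (ck < n)%N -> (b < n)%N -> (c0 < n)%N ->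
  (odd (minn a b) && ((ck <= c0)%N (+) (c0 <= ck)%N))
   (+) ((a < b)%N && (if odd a then (ck <= c0)%N else (c0 <= ck)%N))
   (+) ((b < a)%N && (if odd b then (c0 <= ck)%N else (ck <= c0)%N))
  = (n * ck + (n.-1 - a) < n * c0 + (n.-1 - b))%N (+) (mSn n a ck < mSn n b c0)%N.
Proof.
move=> ha hck hb hc0.
rewrite lexn; try lia.
have -> : (n.-1 - a < n.-1 - b)%N = (b < a)%N by lia.
have -> : (mSn n a ck < mSn n b c0)%N = (a < b)%N || (a == b) &&
   (if odd a then (c0 < ck)%N else (ck < c0)%N).
  have E : forall r c, mSn n r c = (n * r + (if odd r then n.-1 - c else c))%N.
    by move=> r c; rewrite /mSn; case: (odd r).
  rewrite !E lexn; last 2 first.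
  - by case: (odd a); lia.
  - by case: (odd b); lia.
  case: (eqVneq a b) => [<-|ne] /=; last by [].
  by case: (odd a); lia.
case: (ltngtP a b) => hab; case: (ltngtP ck c0) => hc; try subst; dec;
  rewrite /= ?andbF ?andbT ?addbF ?orbF ?orbT; try (by case: (odd _)).
Qed.

End PB.
Import PB.

Import Order.TTheory GRing.Theory Num.Theory.

Module PA.
Local Open Scope ring_scope.

Section Mono.
Variable L : nat.
Implicit Types (f g : basis L -> basis L) (ph ps : basis L -> algC).

Definition mono f ph : op L := fun x y => (x == f y)%:R * ph y.

Lemma opext (A B : op L) : (forall x y, A x y = B x y) -> A = B.
Proof. by move=> h; do 2 apply: functional_extensionality => ?; apply: h. Qed.

Lemma mono_ext f g ph ps : f =1 g -> ph =1 ps -> mono f ph = mono g ps.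
Proof. by move=> e1 e2; apply: opext => x y; rewrite /mono e1 e2. Qed.

Lemma mulop_mono f g ph ps :
  mulop (mono f ph) (mono g ps) = mono (f \o g) (fun y => ph (g y) * ps y).
Proof.
apply: opext => x y.
rewrite /mulop /mono (bigD1 (g y)) //= eqxx mul1r big1 ?addr0 ?mulrA //.
by move=> z /negbTE ->; rewrite mul0r mulr0.
Qed.

Lemma idop_mono : idop L = mono id (fun _ => 1).
Proof. by apply: opext => x y; rewrite /mono mulr1. Qed.

Lemma permop_mono f : permop f = mono f (fun _ => 1).
Proof. by apply: opext => x y; rewrite /mono mulr1. Qed.

Lemma adj_diag ph : adj (mono id ph) = mono id (fun y => (ph y)^*).
Proof.
apply: opext => x y; rewrite /adj /mono /= rmorphM /= conjC_nat.
by case: (eqVneq x y) => [->|ne]; rewrite ?mul0r.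
Qed.

Lemma mono_conj f ps : injective f ->
  mulop (mulop (adj (mono f (fun _ => 1))) (mono id ps)) (mono f (fun _ => 1))
  = mono id (fun y => ps (f y)).
Proof.
move=> finj; apply: opext => x y.
rewrite /mulop /adj /mono.
rewrite (eq_bigr (fun z => (z == f y)%:R * ((f x == f y)%:R * ps (f y)))); last first.
  move=> z _; rewrite (bigD1 z) //= eqxx mul1r big1 ?addr0; last first.
    by move=> w /negbTE ->; rewrite mul0r mulr0.
  rewrite !mulr1 conjC_nat.
  case: (eqVneq z (f y)) => [->|ne]; last by rewrite /= !(mulr0n, mulr0, mul0r).
  by rewrite /= mulr1 mul1r eq_sym.
rewrite (bigD1 (f y)) //= eqxx mul1r big1 ?addr0; last first.
  by move=> z /negbTE ->; rewrite mul0r.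
by rewrite (inj_eq finj).
Qed.

Lemma big_diag (I : Type) (r : seq I) (P : pred I) (F : I -> basis L -> algC) :
  \big[@mulop L/idop L]_(i <- r | P i) mono id (F i)
  = mono id (fun y => \prod_(i <- r | P i) F i y).
Proof.
elim: r => [|i r IH]; first by rewrite big_nil idop_mono; apply: mono_ext => // y; rewrite big_nil.
rewrite big_cons IH; case: ifP => Pi.
  by rewrite mulop_mono; apply: mono_ext => // y; rewrite big_cons Pi.
by apply: mono_ext => // y; rewrite big_cons Pi.
Qed.

End Mono.

End PA.
Import PA.

Module PD.

Section Sites.
Variable L : nat.

Definition flip (y : basis L) (j : site L) : basis L := setbit y j (~~ y j).

Lemma flipE y j k : flip y j k = y k (+) (k == j).
Proof.
rewrite /flip /setbit ffunE; case: eqP => [->|]; by rewrite ?addbT ?addbF.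
Qed.

Lemma xor_pick_fin (T : finType) (a : T) (F : T -> bool) :
  \big[addb/false]_(t : T) ((t == a) && F t) = F a.
Proof. by rewrite (bigD1 a) //= eqxx big1 ?addbF // => t /negbTE ->. Qed.

Lemma xor_mkcond (T : finType) (P : pred T) (F : T -> bool) :
  \big[addb/false]_(t | P t) F t = \big[addb/false]_t (P t && F t).
Proof. by rewrite big_mkcond; apply: eq_bigr => t _; case: (P t). Qed.

Definition lin (y : basis L) (f : site L -> bool) :=
  \big[addb/false]_(t : site L) (y t && f t).

Lemma linD y f g : lin y f (+) lin y g = lin y (fun t => f t (+) g t).
Proof. by rewrite /lin -big_split; apply: eq_bigr => t _; case: (y t). Qed.

Lemma lin_andr y f c : lin y f && c = lin y (fun t => f t && c).
Proof.
case: c; first by rewrite andbT; apply: eq_bigr => t _; rewrite andbT.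
by rewrite andbF /lin big1 // => t _; rewrite !andbF.
Qed.

Lemma lin_andl y f c : c && lin y f = lin y (fun t => c && f t).
Proof. by rewrite andbC lin_andr /lin; apply: eq_bigr => t _; congr (_ && _); apply: andbC. Qed.

Lemma lin_sum (I : finType) (P : pred I) y (F : I -> site L -> bool) :
  \big[addb/false]_(i | P i) lin y (F i) = lin y (fun t => \big[addb/false]_(i | P i) F i t).
Proof. by rewrite /lin exchange_big; apply: eq_bigr => t _; rewrite xor_andl. Qed.

Definition rect (s t : site L) := R s.1 s.2 t.1 t.2.

Definition Umap (x : basis L) : basis L := Cleft_map (Cup_map x).

Lemma Cup_lin x s : Cup_map x s = lin x (fun t => (t.2 == s.2) && (s.1 <= t.1)%N).
Proof. by rewrite /Cup_map ffunE xor_mkcond; apply: eq_bigr => t _; rewrite andbC. Qed.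

Lemma Umap_lin x s : Umap x s = lin x (rect s).
Proof.
rewrite /Umap /Cleft_map ffunE; case: ifP => hodd.
  by rewrite Cup_lin /lin; apply: eq_bigr => t _; congr (_ && _); rewrite /rect /R hodd andbC.
rewrite xor_mkcond (eq_bigr (fun t' : site L => lin x (fun t => ((t'.1 == s.1) && (s.2 <= t'.2)%N)
     && ((t.2 == t'.2) && (t'.1 <= t.1)%N)))); last first.
  by move=> t' _; rewrite Cup_lin lin_andl.
rewrite lin_sum; apply: eq_bigr => t _; congr (_ && _).
rewrite -(xor_pick_fin (s.1, t.2) (fun _ => rect s t)).
apply: eq_bigr => -[i j] _ /=; rewrite /rect /R hodd xpair_eqE.
case: (eqVneq i s.1) => [->|] //=; case: (eqVneq j t.2) => [->|ne].
  by rewrite /= andbC.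
by rewrite /= andbF.
Qed.

Lemma Umap_flip x j s : Umap (flip x j) s = Umap x s (+) rect s j.
Proof.
rewrite !Umap_lin /lin (eq_bigr (fun t => (x t && rect s t) (+) ((t == j) && rect s t))).
  by rewrite big_split /= xor_pick_fin.
by move=> t _; rewrite flipE; case: (x t); case: (t == j); case: (rect s t).
Qed.

Definition down (a : site L) : site L := (insubd a.1 (a.1).+1, a.2).

Definition pairP (a b : site L) := (b.2 == a.2) && (val b.1 == (val a.1).+1).

Lemma pairs (F : site L -> site L -> bool) :
  \big[addb/false]_(a : site L) \big[addb/false]_(b : site L | pairP a b) F a b
  = \big[addb/false]_(a : site L) (((val a.1).+1 < L)%N && F a (down a)).
Proof.
apply: eq_bigr => a _; case: (ltnP a.1.+1 L) => h /=.
  rewrite (eq_bigl (pred1 (down a))) ?big_pred1_eq // => -[i j].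
  rewrite /pairP /down /= xpair_eqE andbC; congr (_ && _).
  by rewrite -val_eqE val_insubd h.
rewrite big_pred0 // => -[i j]; rewrite /pairP /=.
apply/negbTE/andP => -[_ /eqP e]; have := ltn_ord i; move: e; rewrite /= => ->; rewrite ltnNge => /negP; apply; exact: h.
Qed.

Lemma sum_site (G : nat -> nat -> bool) :
  \big[addb/false]_(a : site L) G a.1 a.2
  = \big[addb/false]_(0 <= r < L) \big[addb/false]_(0 <= c < L) G r c.
Proof.
rewrite -(pair_big xpredT xpredT (fun (i j : 'I_L) => G i j)) /= big_mkord.
by apply: eq_bigr => i _; rewrite big_mkord.
Qed.

Lemma rect_down a t : ((val a.1).+1 < L)%N -> rect (down a) t = R (val a.1).+1 a.2 t.1 t.2.
Proof. by move=> h; rewrite /rect /down /= val_insubd h. Qed.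

Lemma Qconst j :
  \big[addb/false]_(a : site L) \big[addb/false]_(b : site L | pairP a b) (rect a j && rect b j)
  = odd j.1.
Proof.
rewrite pairs.
rewrite (eq_bigr (fun a : site L => ((a.1.+1 < L)%N && (R a.1 a.2 j.1 j.2 && R a.1.+1 a.2 j.1 j.2))));
  last by move=> a _; case: (ltnP a.1.+1 L) => h //=; rewrite rect_down.
rewrite (sum_site (fun r c => ((r.+1 < L)%N && (R r c j.1 j.2 && R r.+1 c j.1 j.2)))).
rewrite (eq_bigr (fun r => (r < j.1)%N)); last first.
  move=> r _; rewrite xor_andl colR // if_same leqnn andbT; have := ltn_ord j.1; lia.
by rewrite xor_lt; have := ltn_ord j.1 => h; have -> : minn L j.1 = j.1 by lia.
Qed.

Lemma Klin j t :
  \big[addb/false]_(a : site L) \big[addb/false]_(b : site L | pairP a b)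
     ((rect a t && rect b j) (+) (rect a j && rect b t))
  = (mZ t < mZ j)%N (+) (mS t < mS j)%N.
Proof.
rewrite pairs.
rewrite (eq_bigr (fun a : site L => ((a.1.+1 < L)%N &&
   ((R a.1 a.2 t.1 t.2 && R a.1.+1 a.2 j.1 j.2) (+) (R a.1 a.2 j.1 j.2 && R a.1.+1 a.2 t.1 t.2)))));
  last by move=> a _; case: (ltnP a.1.+1 L) => h //=; rewrite !rect_down.
rewrite (sum_site (fun r c => ((r.+1 < L)%N &&
   ((R r c t.1 t.2 && R r.+1 c j.1 j.2) (+) (R r c j.1 j.2 && R r.+1 c t.1 t.2))))).
rewrite (eq_bigr (fun r => (r.+1 < L)%N &&
     ([&& (r <= t.1)%N, (r.+1 <= j.1)%N & (if odd r then (t.2 <= j.2)%N else (j.2 <= t.2)%N)] (+)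
      [&& (r <= j.1)%N, (r.+1 <= t.1)%N & (if odd r then (j.2 <= t.2)%N else (t.2 <= j.2)%N)]))).
  rewrite (@rowsum L t.1 j.1 (t.2 <= j.2)%N (j.2 <= t.2)%N (ltn_ord _) (ltn_ord _)).
  by rewrite (@C2nat L) // ltn_ord.

by move=> r _; rewrite xor_andl big_split /= !colR.
Qed.

Definition Qf (u : site L -> bool) :=
  \big[addb/false]_(a : site L) \big[addb/false]_(b : site L | pairP a b) (u a && u b).

Definition Eb (y : basis L) :=
  (\big[addb/false]_(a : site L | odd a.1) y a) (+) Qf (Umap y).

Lemma Pm_lin (y : basis L) (m : site L -> nat) j :
  \big[addb/false]_(k | (m k < m j)%N) y k = lin y (fun t => (m t < m j)%N).
Proof. by rewrite xor_mkcond; apply: eq_bigr => t _; rewrite andbC. Qed.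

Lemma KEY (y : basis L) j : Eb (flip y j) (+) Eb y =
  (\big[addb/false]_(k | (mZ k < mZ j)%N) y k) (+) (\big[addb/false]_(k | (mS k < mS j)%N) y k).
Proof.
have h1 : (\big[addb/false]_(a : site L | odd a.1) flip y j a) (+)
          (\big[addb/false]_(a : site L | odd a.1) y a) = odd j.1.
  rewrite -big_split /= (eq_bigr (fun a => a == j)); last first.
    by move=> a _; rewrite flipE; case: (y a); case: (a == j).
  rewrite xor_mkcond -(xor_pick_fin j (fun a : site L => odd a.1)).
  by apply: eq_bigr => a _; rewrite andbC.
have h2 : Qf (Umap (flip y j)) (+) Qf (Umap y) =
    lin y (fun t => (mZ t < mZ j)%N (+) (mS t < mS j)%N) (+) odd j.1.
  rewrite /Qf -big_split /=.
  transitivity (\big[addb/false]_(a : site L) \big[addb/false]_(b : site L | pairP a b)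
     (((Umap y a && rect b j) (+) (rect a j && Umap y b)) (+) (rect a j && rect b j))).
    apply: eq_bigr => a _; rewrite -big_split /=; apply: eq_bigr => b _.
    rewrite !Umap_flip.
    by case: (Umap y a); case: (Umap y b); case: (rect a j); case: (rect b j).
  under eq_bigr do rewrite big_split /=.
  rewrite big_split /= Qconst; congr (_ (+) _).
  under eq_bigr do (under eq_bigr do rewrite !Umap_lin lin_andr lin_andl linD).
  under eq_bigr do rewrite lin_sum.
  rewrite lin_sum /lin; apply: eq_bigr => t _; congr (_ && _).
  by rewrite Klin.
rewrite /Eb addbACA h1 h2 addbC -addbA addbb addbF !Pm_lin linD.
by [].
Qed.

End Sites.

End PD.
Import PD.

Module PE.

Section Gen.
Variable L : nat.

Definition allsites : seq (site L) := enum {: site L}.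
Lemma mem_allsites s : s \in allsites.
Proof. by rewrite mem_enum. Qed.
Lemma uniq_allsites : uniq allsites.
Proof. exact: enum_uniq. Qed.
Lemma mem_fall (P : pred (site L)) s : (s \in [seq x <- allsites | P x]) = P s.
Proof. by rewrite mem_filter mem_allsites andbT. Qed.

Definition stepF (acc : op L) (l : seq (gate L)) := mulop (layer_op l) acc.

Lemma CNOT_mono (c t : site L) :
  CNOTop c t = mono (fun y => setbit y t (y t (+) y c)) (fun _ => 1%R).
Proof. by apply: opext => x y; rewrite /mono GRing.mulr1. Qed.

Lemma cnot_list (ts : seq (site L)) (c : site L -> site L) :
  uniq ts -> (forall s, s \in ts -> c s \notin ts) ->
  \big[@mulop L/idop L]_(g <- [seq GCNOT (c s) s | s <- ts]) gate_op g
  = permop (fun y => [ffun k => if k \in ts then y k (+) y (c k) else y k]).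
Proof.
elim: ts => [|s ts IH] /=.
  move=> _ _; rewrite big_nil idop_mono permop_mono; apply: mono_ext => // y.
  by apply/ffunP => k; rewrite ffunE.
move=> /andP [sts uts] hc; rewrite big_cons IH //; last first.
  by move=> s' hs'; have := hc s'; rewrite inE hs' orbT => /(_ isT); rewrite inE negb_or => /andP[].
rewrite /= CNOT_mono permop_mono mulop_mono permop_mono; apply: mono_ext => [y|y]; last first.
  by rewrite GRing.mulr1.
have hcs : c s \notin ts by have := hc s; rewrite inE eqxx /= inE negb_or => /(_ isT) /andP[].
apply/ffunP => k; rewrite /setbit /= !ffunE inE.
case: (eqVneq k s) => [->|ne] /=; last by [].
by rewrite (negbTE sts) (negbTE hcs).
Qed.

Lemma uniq_pairs (ts : seq (site L)) (f g : site L -> site L) :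
  uniq ts -> {in ts &, injective f} -> {in ts &, injective g} ->
  (forall s s', s \in ts -> s' \in ts -> f s != g s') ->
  uniq (flatten [seq [:: f s; g s] | s <- ts]).
Proof.
elim: ts => [//|s ts IH] /= /andP [sts uts] injf injg hfg.
have uR : uniq (flatten [seq [:: f s0; g s0] | s0 <- ts]).
  apply: IH => //.
  - by move=> a b ha hb; apply: injf; rewrite inE ?ha ?hb orbT.
  - by move=> a b ha hb; apply: injg; rewrite inE ?ha ?hb orbT.
  - by move=> a b ha hb; apply: hfg; rewrite inE ?ha ?hb orbT.
have mem_rest : forall x, x \in flatten [seq [:: f s0; g s0] | s0 <- ts] ->
    exists2 s', s' \in ts & (x == f s') || (x == g s').
  move=> x /flattenP [l /mapP [s' hs' ->]]; rewrite !inE => hx.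
  by exists s'.
rewrite uR andbT inE negb_or hfg ?mem_head //=.
apply/andP; split; apply/negP.
- move=> /mem_rest [s' hs' /orP [/eqP e|/eqP e]]; have hs2 : s' \in s :: ts by rewrite inE hs' orbT.
    by have h := injf _ _ (mem_head s ts) hs2 e; move: sts; rewrite h hs'.
  by move: (hfg s s' (mem_head s ts) hs2); rewrite e eqxx.
- move=> /mem_rest [s' hs' /orP [/eqP e|/eqP e]]; have hs2 : s' \in s :: ts by rewrite inE hs' orbT.
    by move: (hfg s' s hs2 (mem_head s ts)); rewrite -e eqxx.
  by have h := injg _ _ (mem_head s ts) hs2 e; move: sts; rewrite h hs'.
Qed.

End Gen.

Section Ladder.
Variable L : nat.
Variables (mk : 'I_L -> 'I_L -> site L) (pos oth : site L -> 'I_L) (act : 'I_L -> bool).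
Hypothesis mkK : forall s, mk (pos s) (oth s) = s.
Hypothesis posK : forall p o, pos (mk p o) = p.
Hypothesis othK : forall p o, oth (mk p o) = o.

Definition nxt (s : site L) : site L := mk (insubd (pos s) (pos s).+1) (oth s).
Definition LS (y : basis L) (o : 'I_L) (p : nat) :=
  \big[addb/false]_(i : 'I_L | (p <= i)%N) y (mk i o).
Definition Gm (p : nat) (y : basis L) : basis L :=
  [ffun s => if act (oth s) && (p <= pos s)%N then LS y (oth s) (pos s) else y s].
Definition fl (p : nat) (y : basis L) : basis L :=
  [ffun s => if act (oth s) && (pos s == p :> nat) then y s (+) y (nxt s) else y s].

Lemma pos_nxt s : ((pos s).+1 < L)%N -> (pos (nxt s) : nat) = (pos s).+1.
Proof. by move=> h; rewrite /nxt posK val_insubd h. Qed.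
Lemma oth_nxt s : oth (nxt s) = oth s. Proof. by rewrite /nxt othK. Qed.

Lemma LS_rec y o (p : 'I_L) : LS y o p = y (mk p o) (+) LS y o p.+1.
Proof.
rewrite /LS (bigD1 p) //=; congr (_ (+) _); apply: eq_bigl => i.
by rewrite -val_eqE /= [(p < i)%N]ltn_neqAle eq_sym andbC.
Qed.

Lemma LS_L y o : LS y o L = false.
Proof. by rewrite /LS big_pred0 // => i; rewrite leqNgt ltn_ord. Qed.

Lemma Gm_step p y : (p.+1 < L)%N -> fl p (Gm p.+1 y) = Gm p y.
Proof.
move=> hp; apply/ffunP => s; rewrite !ffunE.
case: (eqVneq (pos s : nat) p) => [e|ne].
  rewrite andbT; case ha: (act (oth s)) => //=.
  have hs : ((pos s).+1 < L)%N by rewrite e.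
  rewrite oth_nxt ha pos_nxt // e ltnn leqnn /=.
  by rewrite leqnn -e (LS_rec _ _ (pos s)) mkK.
rewrite andbF; congr (if _ then _ else _).
by rewrite [(p < pos s)%N]ltn_neqAle eq_sym ne.
Qed.

Lemma Gm_last y : Gm L.-1 y = y.
Proof.
apply/ffunP => s; rewrite ffunE; case: ifP => // /andP [_ h].
have e : (pos s).+1 = L by have := ltn_ord (pos s); lia.
by rewrite (LS_rec _ _ (pos s)) e LS_L addbF mkK.
Qed.

Lemma fl_inv p y : (p.+1 < L)%N -> fl p (fl p y) = y.
Proof.
move=> hp; apply/ffunP => s; rewrite !ffunE.
case: ifP => [/andP [ha /eqP e]|hn]; last by rewrite hn.
have hs : ((pos s).+1 < L)%N by rewrite e.
rewrite ha e eqxx /= oth_nxt ha pos_nxt // e.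
rewrite (_ : (p.+1 == p) = false) /=; last by lia.
by rewrite -addbA addbb addbF.
Qed.

Definition cF (X : seq nat) (y : basis L) := foldl (fun y p => fl p y) y X.

Lemma cF_rev X y : all (fun p => p.+1 < L)%N X -> cF (rev X) (cF X y) = y.
Proof.
elim: X y => [//|p X IH] y /= /andP [hp hX].
by rewrite rev_cons /cF foldl_rcons -/(cF _ _) IH // fl_inv.
Qed.

Definition Xl := rev (iota 0 L.-1).

Lemma cF_Xl y : cF Xl y = Gm 0 y.
Proof.
have key : forall n p, (p + n <= L.-1)%N -> cF (rev (iota p n)) (Gm (p + n) y) = Gm p y.
  elim=> [|n IH] p h; first by rewrite addn0.
  rewrite /= rev_cons /cF foldl_rcons -/(cF _ _) -addSnnS IH; last by lia.
  by rewrite Gm_step //; lia.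
by rewrite /Xl -{1}(Gm_last y) -(add0n L.-1) key.
Qed.

Definition layer (p : nat) : seq (gate L) :=
  [seq GCNOT (nxt s) s | s <- allsites L & act (oth s) && (pos s == p :> nat)].

Lemma layer_opE p : (p.+1 < L)%N -> layer_op (layer p) = permop (fl p).
Proof.
move=> hp; rewrite /layer_op /layer cnot_list.
- congr permop; apply: functional_extensionality => y; apply/ffunP => k.
  by rewrite !ffunE mem_fall.
- by apply: filter_uniq; apply: uniq_allsites.
- move=> s; rewrite !mem_fall => /andP [ha /eqP e].
  have hs : ((pos s).+1 < L)%N by rewrite e.
  by rewrite oth_nxt ha pos_nxt // e /=; apply/negP => /eqP; lia.
Qed.

Lemma fold_layers X (g : basis L -> basis L) (ph : basis L -> algC) :
  all (fun p => p.+1 < L)%N X ->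
  foldl (@stepF L) (mono g ph) (map layer X) = mono (fun y => cF X (g y)) ph.
Proof.
elim: X g => [|p X IH] g /=; first by move=> _; apply: mono_ext.
move=> /andP [hp hX].
have -> : stepF (mono g ph) (layer p) = mono (fun y => fl p (g y)) ph.
  rewrite /stepF layer_opE // permop_mono mulop_mono.
  by apply: mono_ext => // y; rewrite GRing.mul1r.
by rewrite IH.
Qed.

Lemma all_Xl : all (fun p => p.+1 < L)%N Xl.
Proof. by apply/allP => p; rewrite mem_rev mem_iota add0n; lia. Qed.

Hypothesis adjH : forall s, ((pos s).+1 < L)%N -> adjacent (nxt s) s.

Lemma layer_okE p : (p.+1 < L)%N -> layer_ok (layer p).
Proof.
move=> hp; rewrite /layer_ok; apply/andP; split.
  rewrite /layer all_map; apply/allP => s; rewrite mem_fall => /andP [_ /eqP e] /=.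
  by apply: adjH; rewrite e.
rewrite -map_comp /comp /=.
apply: uniq_pairs.
- by apply: filter_uniq; apply: uniq_allsites.
- move=> s s'; rewrite !mem_fall => /andP [_ /eqP e] /andP [_ /eqP e'] h.
  rewrite -(mkK s) -(mkK s'); have := congr1 oth h; rewrite !oth_nxt => ->.
  by congr mk; apply: val_inj; rewrite /= e e'.
- by [].
- move=> s s'; rewrite !mem_fall => /andP [_ /eqP e] /andP [_ /eqP e'].
  apply/negP => /eqP h; have := congr1 (fun x => (pos x : nat)) h => /=.
  rewrite pos_nxt ?e; lia.
Qed.

Lemma layer_size p : (size (layer p) <= L)%N.
Proof.
rewrite size_map -(size_map oth).
apply: (@leq_trans (size (enum 'I_L))); last by rewrite size_enum_ord.
apply: uniq_leq_size; last by move=> x _; rewrite mem_enum.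
rewrite map_inj_in_uniq; first by apply: filter_uniq; apply: uniq_allsites.
move=> s s'; rewrite !mem_fall => /andP [_ /eqP e] /andP [_ /eqP e'] h.
rewrite -(mkK s) -(mkK s') h; congr mk; apply: val_inj; by rewrite /= e e'.
Qed.

End Ladder.

End PE.
Import PE.

Module PF.

Section Inst.
Variable L : nat.

Definition mkU (p o : 'I_L) : site L := (p, o).
Definition posU (s : site L) : 'I_L := s.1.
Definition othU (s : site L) : 'I_L := s.2.
Definition mkW (p o : 'I_L) : site L := (o, p).
Definition posW (s : site L) : 'I_L := s.2.
Definition othW (s : site L) : 'I_L := s.1.
Definition actU (o : 'I_L) := true.
Definition actW (o : 'I_L) := ~~ odd o.

Lemma mkUK s : mkU (posU s) (othU s) = s. Proof. by case: s. Qed.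
Lemma posUK p o : posU (mkU p o) = p. Proof. by []. Qed.
Lemma othUK p o : othU (mkU p o) = o. Proof. by []. Qed.
Lemma mkWK s : mkW (posW s) (othW s) = s. Proof. by case: s. Qed.
Lemma posWK p o : posW (mkW p o) = p. Proof. by []. Qed.
Lemma othWK p o : othW (mkW p o) = o. Proof. by []. Qed.

Lemma GmU y : Gm mkU posU othU actU 0 y = Cup_map y.
Proof.
apply/ffunP => s; rewrite !ffunE /actU /= /LS.
rewrite (eq_bigr (fun i => \big[addb/false]_(j : 'I_L | j == s.2) y (i, j))); last first.
  by move=> i _; rewrite big_pred1_eq.
rewrite (pair_big_dep _ _ (fun i j => y (i, j))).
apply: eq_big => [[i j]|[i j] _] //=; by rewrite andbC.
Qed.

Lemma GmW y : Gm mkW posW othW actW 0 y = Cleft_map y.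
Proof.
apply/ffunP => s; rewrite !ffunE /actW /= /LS.
case: (odd s.1) => //=.
rewrite (eq_bigr (fun i => \big[addb/false]_(j : 'I_L | j == s.1) y (j, i))); last first.
  by move=> i _; rewrite big_pred1_eq.
rewrite exchange_big /=.
rewrite (pair_big_dep _ _ (fun i j => y (i, j))).
by apply: eq_big => [[i j]|[i j] _].
Qed.

Lemma adjU s : ((posU s).+1 < L)%N -> adjacent (nxt mkU posU othU s) s.
Proof.
move=> h; rewrite /adjacent /nxt /mkU /posU /othU /= val_insubd h.
by rewrite distnn distnEl ?leqnSn // subSnn.
Qed.

Lemma adjW s : ((posW s).+1 < L)%N -> adjacent (nxt mkW posW othW s) s.
Proof.
move=> h; rewrite /adjacent /nxt /mkW /posW /othW /= val_insubd h.
by rewrite distnn distnEl ?leqnSn // subSnn.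
Qed.

End Inst.

End PF.
Import PF.

Module PG.

Section Main1.
Variable L : nat.
Local Open Scope ring_scope.

Lemma sign_prod (I : Type) (r : seq I) (P : pred I) (b : I -> bool) :
  \prod_(i <- r | P i) ((-1) ^+ b i : algC) = (-1) ^+ (\big[addb/false]_(i <- r | P i) b i).
Proof.
apply: esym; apply: (big_morph (fun x : bool => ((-1) ^+ x : algC))) => //.
by move=> x y; rewrite signr_addb.
Qed.

Lemma conj_sign (b : bool) : ((-1) ^+ b : algC)^* = (-1) ^+ b.
Proof. exact: rmorph_sign. Qed.

Lemma Xop_mono (j : site L) : Xop j = mono (fun y => flip y j) (fun _ => 1).
Proof. by apply: opext => x y; rewrite /mono mulr1. Qed.
Lemma Yop_mono (j : site L) : Yop j = mono (fun y => flip y j) (fun y => if y j then - 'i else 'i).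
Proof. by []. Qed.
Lemma Zop_mono (j : site L) : Zop j = mono id (fun y => (-1) ^+ y j).
Proof. by []. Qed.
Lemma CZop_mono (a b : site L) : CZop a b = mono id (fun y => (-1) ^+ (y a && y b)).
Proof. by []. Qed.

Lemma Umap_inj : injective (@Umap L).
Proof.
have hU : forall y, cF (@mkU L) (@posU L) (@othU L) (@actU L) (rev (Xl L)) (Cup_map y) = y.
  move=> y; rewrite -(GmU y) -(cF_Xl (@actU L) (@mkUK L) (@posUK L) (@othUK L)).
  by rewrite (cF_rev (@actU L) (@posUK L) (@othUK L)) ?all_Xl.
have hW : forall y, cF (@mkW L) (@posW L) (@othW L) (@actW L) (rev (Xl L)) (Cleft_map y) = y.
  move=> y; rewrite -(GmW y) -(cF_Xl (@actW L) (@mkWK L) (@posWK L) (@othWK L)).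
  by rewrite (cF_rev (@actW L) (@posWK L) (@othWK L)) ?all_Xl.
move=> x x' e; rewrite -(hU x) -(hU x') -(hW (Cup_map x)) -(hW (Cup_map x')).
by rewrite /Umap in e; rewrite e.
Qed.

Lemma Wop_mono : Wop L = mono id (fun y => (-1) ^+ (Eb y)).
Proof.
have hU : Uop L = mono (fun y => Umap y) (fun _ => 1).
  rewrite /Uop /Cleft /Cup !permop_mono mulop_mono; apply: mono_ext => // y.
  by rewrite mulr1.
rewrite /Wop /Zodd /C2D hU /CZlayer.
under eq_bigr do rewrite Zop_mono.
rewrite big_diag.
under eq_bigr do (under eq_bigr do rewrite CZop_mono; rewrite big_diag).
rewrite big_diag.
rewrite mono_conj; last exact: Umap_inj.
rewrite mulop_mono; apply: mono_ext => // y.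
rewrite /Eb signr_addb sign_prod; congr (_ * _).
under eq_bigr do rewrite sign_prod.
by rewrite sign_prod.
Qed.

Lemma JW_mono (m : site L -> nat) (j : site L) (b : bool) :
  JW m j b = mono (fun y => flip y j)
    (fun y => (if b then (if y j then - 'i else 'i) else 1) *
              (-1) ^+ (\big[addb/false]_(k | (m k < m j)%N) y k)).
Proof.
rewrite /JW; under eq_bigr do rewrite Zop_mono.
rewrite big_diag; case: b; rewrite ?Xop_mono ?Yop_mono mulop_mono;
by apply: mono_ext => // y; rewrite sign_prod.
Qed.

Lemma conj_W (f : basis L -> basis L) (ph : basis L -> algC) :
  mulop (mulop (Wop L) (mono f ph)) (adj (Wop L)) =
  mono f (fun y => (-1) ^+ (Eb (f y) (+) Eb y) * ph y).
Proof.
rewrite Wop_mono adj_diag !mulop_mono; apply: mono_ext => // y /=.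
by rewrite conj_sign signr_addb mulrAC.
Qed.

Lemma maps_gen (m m' : site L -> nat) :
  (forall (y : basis L) j, Eb (flip y j) (+) Eb y =
     (\big[addb/false]_(k | (m k < m j)%N) y k) (+) (\big[addb/false]_(k | (m' k < m' j)%N) y k)) ->
  maps_encoding (Wop L) m m'.
Proof.
move=> H j b; rewrite !JW_mono conj_W; apply: mono_ext => // y.
have -> : Eb (flip y j) (+) Eb y =
  (\big[addb/false]_(k | (m k < m j)%N) y k) (+) (\big[addb/false]_(k | (m' k < m' j)%N) y k) by apply: H.
rewrite signr_addb.
set s1 := (-1) ^+ _; set s2 := (-1) ^+ _.
have e : s1 * s1 = 1 by rewrite /s1 -signr_addb addbb.
rewrite -[RHS]mul1r -e; ring.
Qed.

Lemma part1 : maps_encoding (Wop L) (@mZ L) (@mS L) /\ maps_encoding (Wop L) (@mS L) (@mZ L).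
Proof.
split; apply: maps_gen => y j; first exact: KEY.
by rewrite KEY addbC.
Qed.

End Main1.

End PG.
Import PG.

Module PH.

Section Main2.
Variable L : nat.
Local Open Scope ring_scope.

Definition cupL := map (layer (@mkU L) (@posU L) (@othU L) (@actU L)) (Xl L).
Definition cleftL := map (layer (@mkW L) (@posW L) (@othW L) (@actW L)) (Xl L).
Definition czP (par : bool) (s : site L) := ((s.1).+1 < L)%N && (odd s.1 == par).
Definition czl (par : bool) : seq (gate L) :=
  map (fun s : site L => GCZ (down s) s) (filter (czP par) (allsites L)).
Definition zl : seq (gate L) :=
  map (fun s : site L => GZ s) (filter (fun s : site L => odd s.1) (allsites L)).
Definition circ := cupL ++ cleftL ++ [:: czl false; czl true] ++ rev cleftL ++ rev cupL ++ [:: zl].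

Lemma czl_op par : layer_op (czl par) =
  mono id (fun y => (-1) ^+ (\big[addb/false]_(s <- allsites L | czP par s) (y (down s) && y s))).
Proof.
rewrite /layer_op /czl big_map big_filter.
under eq_bigr do rewrite /= CZop_mono.
by rewrite big_diag; apply: mono_ext => // y; rewrite sign_prod.
Qed.

Lemma zl_op : layer_op zl =
  mono id (fun y => (-1) ^+ (\big[addb/false]_(s <- allsites L | odd s.1) y s)).
Proof.
rewrite /layer_op /zl big_map big_filter.
under eq_bigr do rewrite /= Zop_mono.
by rewrite big_diag; apply: mono_ext => // y; rewrite sign_prod.
Qed.

Lemma step_diag (g : basis L -> basis L) ph ps l : layer_op l = mono id ps ->
  stepF (mono g ph) l = mono g (fun y => ps (g y) * ph y).
Proof. by move=> e; rewrite /stepF e mulop_mono. Qed.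

Lemma xor_allsites (P : pred (site L)) (F : site L -> bool) :
  \big[addb/false]_(s <- allsites L | P s) F s = \big[addb/false]_(s | P s) F s.
Proof. by rewrite /allsites big_enum_cond; apply: eq_bigl => s; rewrite inE. Qed.

Lemma all_iota : all (fun p : nat => (p.+1 < L)%N) (iota 0 L.-1).
Proof. by apply/allP => p; rewrite mem_iota; lia. Qed.

Lemma circ_op : circuit_op circ = Wop L.
Proof.
have -> : circuit_op circ = foldl (@stepF L) (idop L) circ by [].
rewrite /circ !foldl_cat idop_mono /cupL /cleftL.
rewrite (fold_layers (@actU L) (@posUK L) (@othUK L)) ?all_Xl //.
rewrite (fold_layers (@actW L) (@posWK L) (@othWK L)) ?all_Xl //.
rewrite /= (step_diag _ _ (czl_op false)) (step_diag _ _ (czl_op true)).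
rewrite -!map_rev.
rewrite (fold_layers (@actW L) (@posWK L) (@othWK L)) ?all_rev ?all_Xl ?all_iota //.
rewrite (fold_layers (@actU L) (@posUK L) (@othUK L)) ?all_rev ?all_Xl ?all_iota //.
rewrite /= (step_diag _ _ zl_op) Wop_mono.
have hid : forall y, cF (@mkU L) (@posU L) (@othU L) (@actU L) (rev (Xl L))
  (cF (@mkW L) (@posW L) (@othW L) (@actW L) (rev (Xl L))
   (cF (@mkW L) (@posW L) (@othW L) (@actW L) (Xl L)
    (cF (@mkU L) (@posU L) (@othU L) (@actU L) (Xl L) y))) = y.
  move=> y; rewrite (cF_rev (@actW L) (@posWK L) (@othWK L)) ?all_Xl //.
  by rewrite (cF_rev (@actU L) (@posUK L) (@othUK L)) ?all_Xl.
have hU : forall y, cF (@mkW L) (@posW L) (@othW L) (@actW L) (Xl L)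
    (cF (@mkU L) (@posU L) (@othU L) (@actU L) (Xl L) y) = Umap y.
  move=> y; rewrite (cF_Xl (@actU L) (@mkUK L) (@posUK L) (@othUK L)) GmU.
  by rewrite (cF_Xl (@actW L) (@mkWK L) (@posWK L) (@othWK L)) GmW.
apply: mono_ext => // y; rewrite hid !hU mulr1 /Eb signr_addb.
rewrite xor_allsites. congr (_ * _).
rewrite -signr_addb. rewrite !xor_allsites. rewrite /Qf pairs. congr (_ ^+ _).
rewrite (xor_mkcond (czP true)) (xor_mkcond (czP false)) -big_split /=.
rewrite (eq_bigr (fun a : site L => [&& (a.1.+1 < L)%N, Umap y a & Umap y (down a)])) //.
move=> s _; rewrite /czP.
by case: (odd s.1); case: (s.1.+1 < L)%N; case: (Umap y s); case: (Umap y (down s)).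
Qed.

End Main2.

End PH.
Import PH.

Module PI.

Section Main3.
Variable L : nat.

Lemma size_allsites : size (allsites L) = (L * L)%N.
Proof. by rewrite /allsites -cardE card_prod !card_ord. Qed.

Lemma sumn_le (T : Type) (s : seq T) (f : T -> nat) k :
  (forall x, f x <= k)%N -> (sumn (map f s) <= size s * k)%N.
Proof.
move=> h; elim: s => [//|x s IH] /=; rewrite mulSn.
by apply: leq_add.
Qed.

Lemma czl_ok par : layer_ok (czl L par).
Proof.
rewrite /layer_ok /czl all_map; apply/andP; split.
  apply/allP => s; rewrite mem_fall /czP => /andP [h _] /=.
  exact: (@adjU L s h).
rewrite -map_comp /comp /=.
apply: (@uniq_pairs L _ (@down L) id).
- by apply: filter_uniq; apply: uniq_allsites.
- move=> s s'; rewrite !mem_fall /czP => /andP [h _] /andP [h' _] e.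
  have e1 := congr1 (fun x : site L => (x.1 : nat)) e.
  have e2 := congr1 (fun x : site L => x.2) e.
  move: e1 e2; rewrite /down /= !val_insubd h h' => -[e1] e2.
  case: s s' e1 e2 {e h h'} => [i j] [i' j'] /= e1 ->.
  by congr pair; apply: val_inj.
- by move=> s s' _ _.
- move=> s s'; rewrite !mem_fall /czP => /andP [h /eqP p1] /andP [h' /eqP p2].
  apply/negP => /eqP e; have := congr1 (fun x : site L => odd (x.1 : nat)) e.
  by rewrite /down /= val_insubd h /= p1 p2; case: par {p1 p2}.
Qed.

Lemma zl_ok : layer_ok (zl L).
Proof.
rewrite /layer_ok /zl all_map; apply/andP; split; first by apply/allP.
rewrite -map_comp /comp /= flatten_map1 map_id.
by apply: filter_uniq; apply: uniq_allsites.
Qed.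

Lemma circ_ok : all (@layer_ok L) (circ L).
Proof.
have hU : all (@layer_ok L) (cupL L).
  rewrite /cupL all_map; apply/allP => p; rewrite mem_rev mem_iota add0n => hp /=.
  apply: (layer_okE (@actU L) (@mkUK L) (@posUK L) (@othUK L) (@adjU L)); lia.
have hW : all (@layer_ok L) (cleftL L).
  rewrite /cleftL all_map; apply/allP => p; rewrite mem_rev mem_iota add0n => hp /=.
  apply: (layer_okE (@actW L) (@mkWK L) (@posWK L) (@othWK L) (@adjW L)); lia.
rewrite /circ !all_cat !all_rev hU hW /= zl_ok andbT.
by rewrite (czl_ok false) (czl_ok true).
Qed.

Lemma circ_size : (size (circ L) <= 7 * L.+1)%N.
Proof. by rewrite /circ !size_cat !size_rev !size_map /Xl size_rev size_iota /=; lia. Qed.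

Lemma circ_csize : (circuit_size (circ L) <= 7 * (L * L).+1)%N.
Proof.
rewrite /circuit_size /circ !map_cat !sumn_cat !map_rev !sumn_rev /=.
have hU : (sumn (map size (cupL L)) <= L.-1 * L)%N.
  rewrite /cupL -map_comp.
  have := sumn_le (Xl L) (fun p => layer_size (@actU L) (@mkUK L) p).
  by rewrite /Xl size_rev size_iota.
have hW : (sumn (map size (cleftL L)) <= L.-1 * L)%N.
  rewrite /cleftL -map_comp.
  have := sumn_le (Xl L) (fun p => layer_size (@actW L) (@mkWK L) p).
  by rewrite /Xl size_rev size_iota.
have hc : forall par, (size (czl L par) <= L * L)%N.
  move=> par; rewrite /czl size_map -size_allsites size_filter; exact: count_size.
have hz : (size (zl L) <= L * L)%N.
  rewrite /zl size_map -size_allsites size_filter; exact: count_size.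
have := hc false; have := hc true; move: hU hW hz.
have : (L.-1 * L <= L * L)%N by rewrite leq_mul2r leq_pred orbT.
lia.
Qed.

End Main3.


End PI.
Import PI.

Theorem mainTheorem4 :
  (forall L : nat,
     maps_encoding (Wop L) (@mZ L) (@mS L) /\
     maps_encoding (Wop L) (@mS L) (@mZ L)) /\
  (exists c_size c_depth : nat, forall L : nat,
     exists ls : seq (seq (gate L)),
       all (@layer_ok L) ls /\
       (size ls <= c_depth * L.+1)%N /\
       (circuit_size ls <= c_size * (L * L).+1)%N /\
       circuit_op ls = Wop L).
Proof.
split; first by move=> L; exact: part1.
exists 7, 7 => L; exists (circ L).
split; first exact: circ_ok.
split; first exact: circ_size.
split; first exact: circ_csize.
exact: circ_op.
Qed.
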